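(* Let $p,q,\mu_h\in(0,1)$ and $y_0,y_1$, $x_0(y),x_1(y)$ be as in the context, and let $y_b$ be the unique root of the linear function $b(y)=(p\mu_h+\bar p\bar\mu_h)(qy+\bar q)-1$. Then: (i) $1<y_0<y_b<y_1$; (ii) for every real $y$ with $-1\le y\le 1$ we have $x_0(y)<x_1(y)$ and $0<x_0(y)\le 1$; moreover, at $y=0$, $0<x_0(0)<1<x_1(0)$.
   Context: Fix $p,q,\mu_h,\mu_l\in(0,1)$ with $p+q+\mu_h+\mu_l=1$; for real $x$ write $\bar x=1-x$; let $\rho=p/\mu_h+q/\mu_l$ and assume $\rho<1$. Define $a(y)=p\bar\mu_h(qy+\bar q)$, $b(y)=(p\mu_h+\bar p\bar\mu_h)(qy+\bar q)-1$, $c(y)=\bar p\mu_h(qy+\bar q)$ and $\Delta(y)=b(y)^2-4a(y)c(y)=(p\mu_h-\bar p\bar\mu_h)^2(qy+\bar q)^2-2(p\mu_h+\bar p\bar\mu_h)(qy+\bar q)+1$. Its two zeros are $y_0=\frac{p\mu_h+\bar p\bar\mu_h-2\sqrt{p\mu_h\bar p\bar\mu_h}}{(p\mu_h-\bar p\bar\mu_h)^2q}-\frac{\bar q}{q}$ and $y_1=\frac{p\mu_h+\bar p\bar\mu_h+2\sqrt{p\mu_h\bar p\bar\mu_h}}{(p\mu_h-\bar p\bar\mu_h)^2q}-\frac{\bar q}{q}$. Let $\sqrt{\Delta(y)}$ denote the branch analytic on $\mathbb{C}\setminus[y_0,y_1]$ which is positive for real $y<y_0$, and let $x_0(y)=\frac{1-(p\mu_h+\bar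 p\bar\mu_h)(qy+\bar q)-\sqrt{\Delta(y)}}{2p\bar\mu_h(qy+\bar q)}$, $x_1(y)=\frac{1-(p\mu_h+\bar p\bar\mu_h)(qy+\bar q)+\sqrt{\Delta(y)}}{2p\bar\mu_h(qy+\bar q)}$ be the two roots in $x$ of $a(y)x^2+b(y)x+c(y)=0$. *)

(* Defs.v *)
From Stdlib Require Import Reals.
Open Scope R_scope.

Definition bar (x : R) : R := 1 - x.

Definition params_ok (p q mh ml : R) : Prop :=
  0 < p < 1 /\ 0 < q < 1 /\ 0 < mh < 1 /\ 0 < ml < 1 /\
  p + q + mh + ml = 1 /\ p / mh + q / ml < 1.

Definition s_of (q y : R) : R := q * y + bar q.

Definition a_fun (p q mh y : R) : R := p * bar mh * s_of q y.
Definition b_fun (p q mh y : R) : R := (p * mh + bar p * bar mh) * s_of q y - 1.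
Definition c_fun (p q mh y : R) : R := bar p * mh * s_of q y.
Definition Delta (p q mh y : R) : R :=
  b_fun p q mh y ^ 2 - 4 * a_fun p q mh y * c_fun p q mh y.

Definition y0 (p q mh : R) : R :=
  (p * mh + bar p * bar mh - 2 * sqrt (p * mh * bar p * bar mh))
    / ((p * mh - bar p * bar mh) ^ 2 * q) - bar q / q.
Definition y1 (p q mh : R) : R :=
  (p * mh + bar p * bar mh + 2 * sqrt (p * mh * bar p * bar mh))
    / ((p * mh - bar p * bar mh) ^ 2 * q) - bar q / q.

(* the unique root of the linear function b *)
Definition yb (p q mh : R) : R :=
  (1 / (p * mh + bar p * bar mh) - bar q) / q.

(* For real y < y0 the chosen branch of sqrt(Delta y) is the positive real
   square root; we only use x0, x1 at such y (y <= 1 < y0). *)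
Definition x0 (p q mh y : R) : R :=
  (1 - (p * mh + bar p * bar mh) * s_of q y - sqrt (Delta p q mh y))
    / (2 * p * bar mh * s_of q y).
Definition x1 (p q mh y : R) : R :=
  (1 - (p * mh + bar p * bar mh) * s_of q y + sqrt (Delta p q mh y))
    / (2 * p * bar mh * s_of q y).

(* Main.v *)
Require Import Defs.
From Stdlib Require Import Reals Lra Psatz.
Open Scope R_scope.

Lemma divlt (D a b : R) : 0 < D -> a < b -> a / D < b / D.
Proof. intros HD H; unfold Rdiv; apply Rmult_lt_compat_r; [apply Rinv_0_lt_compat|]; lra. Qed.
Lemma divpos (D a : R) : 0 < D -> 0 < a -> 0 < a / D.
Proof. intros; apply Rdiv_lt_0_compat; lra. Qed.
Lemma divle1 (D a : R) : 0 < D -> a <= D -> a / D <= 1.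
Proof. intros HD H. replace 1 with (D / D) by (field; lra).
  unfold Rdiv; apply Rmult_le_compat_r; [left; apply Rinv_0_lt_compat|]; lra. Qed.
Lemma divlt1 (D a : R) : 0 < D -> a < D -> a / D < 1.
Proof. intros HD H. replace 1 with (D / D) by (field; lra). apply divlt; lra. Qed.
Lemma divgt1 (D a : R) : 0 < D -> D < a -> 1 < a / D.
Proof. intros HD H. replace 1 with (D / D) by (field; lra). apply divlt; lra. Qed.

Lemma core (p mh r s : R) : 0 < p < 1 -> 0 < mh < 1 ->
  r * r = p * mh * (bar p * bar mh) -> 0 <= r ->
  p * mh + bar p * bar mh + 2 * r < 1 -> 0 < s <= 1 ->
  (1 - (p*mh+bar p*bar mh)*s - sqrt (((p*mh+bar p*bar mh)*s - 1)^2 - 4*(p*bar mh*s)*(bar p*mh*s)))/(2*p*bar mh*s)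
  < (1 - (p*mh+bar p*bar mh)*s + sqrt (((p*mh+bar p*bar mh)*s - 1)^2 - 4*(p*bar mh*s)*(bar p*mh*s)))/(2*p*bar mh*s)
  /\ 0 < (1 - (p*mh+bar p*bar mh)*s - sqrt (((p*mh+bar p*bar mh)*s - 1)^2 - 4*(p*bar mh*s)*(bar p*mh*s)))/(2*p*bar mh*s)
  /\ (1 - (p*mh+bar p*bar mh)*s - sqrt (((p*mh+bar p*bar mh)*s - 1)^2 - 4*(p*bar mh*s)*(bar p*mh*s)))/(2*p*bar mh*s) <= 1
  /\ (s < 1 ->
  (1 - (p*mh+bar p*bar mh)*s - sqrt (((p*mh+bar p*bar mh)*s - 1)^2 - 4*(p*bar mh*s)*(bar p*mh*s)))/(2*p*bar mh*s) < 1 /\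
  1 < (1 - (p*mh+bar p*bar mh)*s + sqrt (((p*mh+bar p*bar mh)*s - 1)^2 - 4*(p*bar mh*s)*(bar p*mh*s)))/(2*p*bar mh*s)).
Proof.
  intros Hp Hm Hr Hr0 Hlt Hs.
  set (A := p*mh) in *. set (B := bar p * bar mh) in *.
  set (Dl := ((A+B)*s - 1)^2 - 4*(p*bar mh*s)*(bar p*mh*s)).
  set (N := 1 - (A+B)*s). set (D := 2*p*bar mh*s).
  assert (HA : 0 < A) by (unfold A; nra).
  assert (HB : 0 < B) by (unfold B, bar; nra).
  assert (HD : 0 < D) by (unfold D, bar; assert (0 < p*(1-mh)) by nra; nra).
  assert (HDl : Dl = (N - 2*r*s)*(N + 2*r*s)).
  { unfold Dl, N. replace (4*(p*bar mh*s)*(bar p*mh*s)) with (4*(A*B)*(s*s)) by (unfold A, B; ring).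
    rewrite <- Hr. ring. }
  assert (HN1 : 0 < N - 2*r*s) by (unfold N; nra).
  assert (HDlp : 0 < Dl) by (rewrite HDl; apply Rmult_lt_0_compat; nra).
  set (d := sqrt Dl).
  assert (Hd : 0 < d) by (apply sqrt_lt_R0; lra).
  assert (Hd2 : d * d = Dl) by (apply sqrt_sqrt; lra).
  assert (Hc : D/2 - N + bar p * mh * s = s - 1) by (unfold D, N, A, B, bar; field).
  assert (HDl2 : Dl = N*N - 2*D*(bar p*mh*s)) by (unfold Dl, N, D; ring).
  assert (Hcpos : 0 < bar p * mh * s) by (unfold bar; assert (0 < (1-p)*mh) by nra; nra).
  split; [apply divlt; lra|].
  split; [apply divpos; [lra|]; nra|].
  split.
  { apply divle1; [lra|].
    destruct (Rle_lt_dec (N - D) 0); [lra|].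
    assert ((N-D)*(N-D) <= d*d) by (rewrite Hd2, HDl2; nra). nra. }
  intros Hs1. split.
  { apply divlt1; [lra|].
    destruct (Rle_lt_dec (N - D) 0); [lra|].
    assert ((N-D)*(N-D) < d*d) by (rewrite Hd2, HDl2; nra). nra. }
  { apply divgt1; [lra|].
    destruct (Rle_lt_dec (D - N) 0); [lra|].
    assert ((D-N)*(D-N) < d*d) by (rewrite Hd2, HDl2; nra). nra. }
Qed.

Lemma ylt1 (q s : R) : 0 < q < 1 -> 1 < s -> 1 < (s - bar q) / q.
Proof. intros. apply divgt1; unfold bar; lra. Qed.
Lemma ylt (q s t : R) : 0 < q < 1 -> s < t -> (s - bar q) / q < (t - bar q) / q.
Proof. intros. apply divlt; lra. Qed.

Theorem lemma3p1 (p q mh ml : R) :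
  params_ok p q mh ml ->
  (1 < y0 p q mh /\ y0 p q mh < yb p q mh /\ yb p q mh < y1 p q mh) /\
  (forall y : R, -1 <= y <= 1 ->
     x0 p q mh y < x1 p q mh y /\ 0 < x0 p q mh y /\ x0 p q mh y <= 1) /\
  (0 < x0 p q mh 0 /\ x0 p q mh 0 < 1 /\ 1 < x1 p q mh 0).
Proof.
  intros [Hp [Hq [Hm [Hl [Hsum Hrho]]]]].
  assert (Hu : 0 < p / mh) by (apply Rdiv_lt_0_compat; lra).
  assert (Hv : 0 < q / ml) by (apply Rdiv_lt_0_compat; lra).
  assert (Hpu : p = (p/mh)*mh) by (field; lra).
  assert (Hqv : q = (q/ml)*ml) by (field; lra).
  assert (Hpm : p < mh) by nra.
  assert (Hql : q < ml) by nra.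
  set (r := sqrt (p * mh * bar p * bar mh)).
  assert (Hr0 : 0 < r) by (apply sqrt_lt_R0; unfold bar; apply Rmult_lt_0_compat; [|lra];
     apply Rmult_lt_0_compat; [|lra]; apply Rmult_lt_0_compat; lra).
  assert (Hr : r * r = p * mh * (bar p * bar mh)).
  { unfold r. rewrite sqrt_sqrt. ring. unfold bar.
    left; apply Rmult_lt_0_compat; [|lra]; apply Rmult_lt_0_compat; [|lra]; apply Rmult_lt_0_compat; lra. }
  set (A := p*mh) in *. set (B := bar p * bar mh) in *.
  assert (HA : 0 < A) by (unfold A; nra).
  assert (HB : 0 < B) by (unfold B, bar; nra).
  assert (HBA : A < B) by (unfold A, B, bar; nra).
  set (T := p + mh - 2*p*mh).
  assert (HT : 0 < T) by (unfold T; nra).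
  assert (HT2 : T*T - 4*(A*B) = (p - mh)*(p-mh)) by (unfold T, A, B, bar; ring).
  assert (Hkey : A + B + 2*r < 1).
  { assert (A + B = 1 - T) by (unfold A, B, T, bar; ring). nra. }
  assert (Hm2 : 0 < A + B - 2*r) by nra.
  assert (HK : (A - B)^2 = (A+B-2*r)*(A+B+2*r)) by nra.
  assert (HKn : (A - B)^2 <> 0) by (rewrite HK; nra).
  assert (Ey0 : y0 p q mh = (1/(A+B+2*r) - bar q)/q).
  { unfold y0; fold A B r. rewrite HK. field. repeat split; lra. }
  assert (Ey1 : y1 p q mh = (1/(A+B-2*r) - bar q)/q).
  { unfold y1; fold A B r. rewrite HK. field. repeat split; lra. }
  assert (Eyb : yb p q mh = (1/(A+B) - bar q)/q) by reflexivity.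
  split.
  { rewrite Ey0, Eyb, Ey1. split; [|split].
    - apply ylt1; [lra|]. apply divgt1; lra.
    - apply ylt; [lra|]. unfold Rdiv; rewrite !Rmult_1_l; apply Rinv_lt_contravar; nra.
    - apply ylt; [lra|]. unfold Rdiv; rewrite !Rmult_1_l; apply Rinv_lt_contravar; nra. }
  assert (Hall : forall y, -1 <= y <= 1 -> 0 < s_of q y <= 1).
  { intros y Hy. unfold s_of, bar. nra. }
  split.
  { intros y Hy. pose proof (core p mh r (s_of q y) Hp Hm Hr (Rlt_le _ _ Hr0) Hkey (Hall y Hy)) as H.
    unfold x0, x1, Delta, a_fun, b_fun, c_fun. tauto. }
  pose proof (core p mh r (s_of q 0) Hp Hm Hr (Rlt_le _ _ Hr0) Hkey (Hall 0 ltac:(lra))) as H.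
  assert (Hs0 : s_of q 0 < 1) by (unfold s_of, bar; lra).
  unfold x0, x1, Delta, a_fun, b_fun, c_fun. tauto.
Qed.
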